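(* Let $x=(B_1,B_2,i,j)\in\mathbf M_{V,W}$ and $x'=(B_1',B_2',i',j')\in\mathbf M_{V',W'}$ be such that $B_1$ and $B_1'$ have no common eigenvalue. If $x$ and $x'$ are both stable (resp. both costable), then $\mathsf T(x,x')$ is stable (resp. costable).
   Context: For vector spaces $V,W$, $\mathbf M_{V,W}=\mathrm{End}(V)^{\oplus2}\oplus\mathrm{Hom}(W,V)\oplus\mathrm{Hom}(V,W)$. A datum $(B_1,B_2,i,j)$ is stable if no proper subspace of $V$ containing $\mathrm{Im}(i)$ is invariant under $B_1,B_2$, and costable if no nonzero subspace of $\mathrm{Ker}(j)$ is invariant under $B_1,B_2$. Let $\widetilde V=V\otimes W'\oplus W\otimes V'$, $\widetilde W=W\otimes W'$. When $B_1,B_1'$ have no common eigenvalue, $\mathsf T(x,x')\in\mathbf M_{\widetilde V,\widetilde W}$ is $$\Bigl(\begin{pmatrix}B_1\otimes\mathrm{Id}_{W'}&0\\0&\mathrm{Id}_W\otimes B_1'\end{pmatrix},\begin{pmatrix}B_2\otimes\mathrm{Id}_{W'}&\widetilde B^{(1,2)}\\\widetilde B^{(2,1)}&\mathrm{Id}_W\otimes B_2'\end{pmatrix},\begin{pmatrix}i\otimes\mathrm{Id}_{W'}\\\mathrm{Id}_W\otimes i'\end{pmatrix},\begin{pmatrix}j\otimes\mathrm{Id}_{W'}&\mathrm{Id}_W\otimes j'\end{pmatrix}\Bigr),$$ where $\widetilde B^{(1,2)}\colon W\otimes V'\to V\otimes W'$ and $\widetilde B^{(2,1)}\colon V\otimes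 W'\to W\otimes V'$ are the unique solutions of $(B_1\otimes\mathrm{Id}_{W'})\widetilde B^{(1,2)}-\widetilde B^{(1,2)}(\mathrm{Id}_W\otimes B_1')+i\otimes j'=0$ and $(\mathrm{Id}_W\otimes B_1')\widetilde B^{(2,1)}-\widetilde B^{(2,1)}(B_1\otimes\mathrm{Id}_{W'})+j\otimes i'=0$. *)

(* Defs.v *)
From HB Require Import structures.
From mathcomp Require Import all_boot all_order all_algebra.
From mathcomp Require Export mxtens.
Set Implicit Arguments. Unset Strict Implicit. Unset Printing Implicit Defensive.
Import GRing.Theory.
Local Open Scope ring_scope.

(* Conventions: V = F^n, W = F^w, with MathComp's ROW-vector convention:
   a linear map f : X -> Y (dim X = a, dim Y = b) is a matrix M : 'M_(a,b)
   acting by v |-> v *m M, so f \o g corresponds to M_g *m M_f.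
   A datum x = (B1,B2,i,j) in M_{V,W} is:
     B1 B2 : 'M_n  (End V),  i : 'M_(w,n)  (Hom(W,V)),  j : 'M_(n,w) (Hom(V,W)).
   Subspaces of V are row spaces of square matrices S : 'M_n. *)

Definition invariant2 (F : fieldType) (n : nat) (B1 B2 S : 'M[F]_n) : Prop :=
  stablemx S B1 /\ stablemx S B2.

Definition stable (F : fieldType) (n w : nat)
  (B1 B2 : 'M[F]_n) (i : 'M[F]_(w, n)) (j : 'M[F]_(n, w)) : Prop :=
  forall S : 'M[F]_n, (i <= S)%MS -> invariant2 B1 B2 S -> (S :=: 1%:M)%MS.

Definition costable (F : fieldType) (n w : nat)
  (B1 B2 : 'M[F]_n) (i : 'M[F]_(w, n)) (j : 'M[F]_(n, w)) : Prop :=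
  forall S : 'M[F]_n, (S <= kermx j)%MS -> invariant2 B1 B2 S -> S = 0.

Definition no_common_eigenvalue (F : fieldType) (n n' : nat)
  (A : 'M[F]_n) (A' : 'M[F]_n') : Prop :=
  forall a : F, ~ (eigenvalue A a /\ eigenvalue A' a).

(* Bt12 : W (x) V' -> V (x) W' solves
   (B1 (x) Id_W') Bt12 - Bt12 (Id_W (x) B1') + i (x) j' = 0  *)
Definition sylv12 (F : fieldType) (n w n' w' : nat)
  (B1 : 'M[F]_n) (i : 'M[F]_(w, n)) (B1' : 'M[F]_n') (j' : 'M[F]_(n', w'))
  (Bt12 : 'M[F]_(w * n', n * w')) : Prop :=
  Bt12 *m (B1 *t (1%:M : 'M[F]_w')) - (1%:M : 'M[F]_w) *t B1' *m Bt12
    + i *t j' = 0.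

(* Bt21 : V (x) W' -> W (x) V' solves
   (Id_W (x) B1') Bt21 - Bt21 (B1 (x) Id_W') + j (x) i' = 0  *)
Definition sylv21 (F : fieldType) (n w n' w' : nat)
  (B1 : 'M[F]_n) (j : 'M[F]_(n, w)) (B1' : 'M[F]_n') (i' : 'M[F]_(w', n'))
  (Bt21 : 'M[F]_(n * w', w * n')) : Prop :=
  Bt21 *m ((1%:M : 'M[F]_w) *t B1') - B1 *t (1%:M : 'M[F]_w') *m Bt21
    + j *t i' = 0.

(* Components of T(x,x') in M_{Vt,Wt}, Vt = V(x)W' (+) W(x)V', Wt = W(x)W',
   given the solutions Bt12, Bt21 (row-vector convention, hence the
   off-diagonal blocks appear transposed in block_mx). *)
Section T.
Variables (F : fieldType) (n w n' w' : nat).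
Variables (B1 B2 : 'M[F]_n) (i : 'M[F]_(w, n)) (j : 'M[F]_(n, w)).
Variables (B1' B2' : 'M[F]_n') (i' : 'M[F]_(w', n')) (j' : 'M[F]_(n', w')).
Variables (Bt12 : 'M[F]_(w * n', n * w')) (Bt21 : 'M[F]_(n * w', w * n')).

Definition T_B1 : 'M[F]_(n * w' + w * n') :=
  block_mx (B1 *t (1%:M : 'M[F]_w')) 0 0 ((1%:M : 'M[F]_w) *t B1').
Definition T_B2 : 'M[F]_(n * w' + w * n') :=
  block_mx (B2 *t (1%:M : 'M[F]_w')) Bt21 Bt12 ((1%:M : 'M[F]_w) *t B2').
Definition T_i : 'M[F]_(w * w', n * w' + w * n') :=
  row_mx (i *t (1%:M : 'M[F]_w')) ((1%:M : 'M[F]_w) *t i').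
Definition T_j : 'M[F]_(n * w' + w * n', w * w') :=
  col_mx (j *t (1%:M : 'M[F]_w')) ((1%:M : 'M[F]_w) *t j').
End T.

(* Main.v *)
Require Import Defs.
From HB Require Import structures.
From mathcomp Require Import all_boot all_order all_algebra.
Set Implicit Arguments. Unset Strict Implicit. Unset Printing Implicit Defensive.
Import GRing.Theory.
Local Open Scope ring_scope.

Lemma idx_eq m K (x y : 'I_m * 'I_K) : (mxtens_index x == mxtens_index y) = (x == y).
Proof. exact: (inj_eq (can_inj (@mxtens_indexK m K))). Qed.

Definition PR {F : fieldType} m K (k : 'I_K) : 'M[F]_(m, m * K) :=
  \matrix_(a, b) (b == mxtens_index (a, k))%:R.
Definition PL {F : fieldType} m K (k : 'I_K) : 'M[F]_(m, K * m) :=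
  \matrix_(a, b) (b == mxtens_index (k, a))%:R.

Arguments PR {F} m K k.
Arguments PL {F} m K k.

Lemma PR_mul (F : fieldType) p q K k (A : 'M[F]_(p,q)) :
  A *m PR q K k = PR p K k *m (A *t (1%:M : 'M_K)).
Proof.
apply/matrixP => a b; case: (mxtens_indexP b) => c l.
rewrite !mxE (bigD1 c) //= (bigD1 (mxtens_index (a,k))) //=.
rewrite big1 ?addr0; last first.
  by move=> d hd; rewrite !mxE idx_eq xpair_eqE eq_sym (negbTE hd) mulr0.
rewrite [X in _ = _ + X]big1 ?addr0; last first.
  by move=> d hd; rewrite !mxE (negbTE hd) mul0r.
rewrite tensmxE !mxE eqxx idx_eq xpair_eqE eqxx mul1r /= eq_sym.
by case: (k == l); rewrite ?mulr1 ?mulr0.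
Qed.

Lemma PL_mul (F : fieldType) p q K k (A : 'M[F]_(p,q)) :
  A *m PL q K k = PL p K k *m ((1%:M : 'M_K) *t A).
Proof.
apply/matrixP => a b; case: (mxtens_indexP b) => l c.
rewrite !mxE (bigD1 c) //= (bigD1 (mxtens_index (k,a))) //=.
rewrite big1 ?addr0; last first.
  by move=> d hd; rewrite !mxE idx_eq xpair_eqE [c == d]eq_sym (negbTE hd) andbF mulr0.
rewrite [X in _ = _ + X]big1 ?addr0; last first.
  by move=> d hd; rewrite !mxE (negbTE hd) mul0r.
rewrite tensmxE !mxE eqxx idx_eq xpair_eqE eqxx mul1r /= andbT eq_sym.
by case: (k == l); rewrite ?mulr1 ?mulr0 ?mul1r ?mul0r.
Qed.

Lemma QR_mul (F : fieldType) p q K k (A : 'M[F]_(p,q)) :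
  (A *t (1%:M : 'M_K)) *m (PR q K k)^T = (PR p K k)^T *m A.
Proof.
apply: trmx_inj; rewrite !trmx_mul !trmxK trmx_tens trmx1.
by rewrite PR_mul.
Qed.

Lemma QL_mul (F : fieldType) p q K k (A : 'M[F]_(p,q)) :
  ((1%:M : 'M_K) *t A) *m (PL q K k)^T = (PL p K k)^T *m A.
Proof.
apply: trmx_inj; rewrite !trmx_mul !trmxK trmx_tens trmx1.
by rewrite PL_mul.
Qed.

Lemma sum_PR (F : fieldType) m K :
  \sum_(k < K) (PR m K k)^T *m PR m K k = 1%:M :> 'M[F]_(m * K).
Proof.
apply/matrixP => b b'; case: (mxtens_indexP b) => a0 k0; case: (mxtens_indexP b') => a1 k1.
rewrite summxE (bigD1 k0) //= big1 ?addr0; last first.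
  move=> k hk; rewrite mxE big1 // => a _; rewrite !mxE idx_eq xpair_eqE [k0 == k]eq_sym (negbTE hk) andbF mul0r //.
rewrite mxE (bigD1 a0) //= big1 ?addr0; last first.
  move=> a ha; rewrite !mxE idx_eq xpair_eqE [a0 == a]eq_sym (negbTE ha) mul0r //.
by rewrite !mxE !idx_eq !xpair_eqE !eqxx mul1r [a1 == _]eq_sym [k1 == _]eq_sym.
Qed.

Lemma sum_PL (F : fieldType) m K :
  \sum_(k < K) (PL m K k)^T *m PL m K k = 1%:M :> 'M[F]_(K * m).
Proof.
apply/matrixP => b b'; case: (mxtens_indexP b) => k0 a0; case: (mxtens_indexP b') => k1 a1.
rewrite summxE (bigD1 k0) //= big1 ?addr0; last first.
  move=> k hk; rewrite mxE big1 // => a _; rewrite !mxE idx_eq xpair_eqE [k0 == k]eq_sym (negbTE hk) mul0r //.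
rewrite mxE (bigD1 a0) //= big1 ?addr0; last first.
  move=> a ha; rewrite !mxE idx_eq xpair_eqE [a0 == a]eq_sym (negbTE ha) andbF mul0r //.
by rewrite !mxE !idx_eq !xpair_eqE !eqxx mul1r [a1 == _]eq_sym [k1 == _]eq_sym.
Qed.

Lemma stable_transfer (F : fieldType) n w N K M (B1 B2 : 'M[F]_n) (i : 'M_(w,n))
  (j : 'M_(n,w)) (B1t B2t : 'M_N) (it : 'M_(M, N))
  (P : 'I_K -> 'M_(n, N)) (Q : 'I_K -> 'M_(N, n)) :
  \sum_k Q k *m P k = 1%:M ->
  (forall k, B1 *m P k = P k *m B1t) -> (forall k, B2 *m P k = P k *m B2t) ->
  (forall k, (i *m P k <= it)%MS) ->
  stable B1 B2 i j ->
  forall m0 (S : 'M_(m0, N)), (it <= S)%MS -> stablemx S B1t -> stablemx S B2t ->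
  (1%:M <= S)%MS.
Proof.
move=> HPQ HB1 HB2 Hi Hst m0 S HiS HS1 HS2.
have HP k : (P k <= S)%MS.
  pose S0 := kermx (P k *m cokermx S).
  have key m (X : 'M_(m, n)) : (X <= S0)%MS = (X *m P k <= S)%MS.
    by rewrite [(X *m P k <= S)%MS]submxE -mulmxA; apply/sub_kermxP/eqP.
  have : (S0 :=: 1%:M)%MS.
    apply: Hst; first by rewrite key; apply: submx_trans (Hi k) HiS.
    have S0P : (S0 *m P k <= S)%MS by rewrite -key.
    split; rewrite key -mulmxA ?HB1 ?HB2 mulmxA.
      exact: submx_trans (submxMr _ S0P) HS1.
    exact: submx_trans (submxMr _ S0P) HS2.
  by move=> /eqmxP/andP[_]; rewrite key mul1mx.
rewrite -HPQ; apply: summx_sub => k _; exact: submx_trans (submxMl _ _) (HP k).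
Qed.

Lemma costable_transfer (F : fieldType) n w N K M (B1 B2 : 'M[F]_n) (i : 'M_(w,n))
  (j : 'M_(n,w)) (B1t B2t : 'M_N) (jt : 'M_(N, M))
  (P : 'I_K -> 'M_(n, N)) (Q : 'I_K -> 'M_(N, n)) (R : 'I_K -> 'M_(M, w)) :
  \sum_k Q k *m P k = 1%:M ->
  (forall k, B1t *m Q k = Q k *m B1) -> (forall k, B2t *m Q k = Q k *m B2) ->
  (forall k, jt *m R k = Q k *m j) ->
  costable B1 B2 i j ->
  forall m0 (S : 'M_(m0, N)), (S <= kermx jt)%MS -> stablemx S B1t -> stablemx S B2t ->
  S = 0.
Proof.
move=> HPQ HB1 HB2 HR Hco m0 S HSj HS1 HS2.
have HQ k : S *m Q k = 0.
  suff H0 : <<S *m Q k>>%MS = 0.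
    by apply/eqP; rewrite -submx0 -(genmxE (S *m Q k)) H0 sub0mx.
  apply: Hco; rewrite /invariant2 ?(eqmx_stable _ (genmxE _)) ?genmxE.
    by apply/sub_kermxP; rewrite -mulmxA -HR mulmxA (sub_kermxP HSj) mul0mx.
  by split; rewrite -mulmxA -?HB1 -?HB2 mulmxA; apply: submxMr.
rewrite -[S]mulmx1 -HPQ mulmx_sumr big1 // => k _; by rewrite mulmxA HQ mul0mx.
Qed.

Lemma eig_transfer (F : fieldType) n N K (B : 'M[F]_n) (Bt : 'M_N)
  (P : 'I_K -> 'M_(n, N)) (Q : 'I_K -> 'M_(N, n)) :
  \sum_k Q k *m P k = 1%:M -> (forall k, Bt *m Q k = Q k *m B) ->
  forall a, eigenvalue Bt a -> eigenvalue B a.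
Proof.
move=> HPQ HB a /eigenvalueP[v Hv nz].
have [k Hk] : exists k, v *m Q k != 0.
  case: (boolP [exists k, v *m Q k != 0]) => [/existsP//|/existsPn H].
  case/eqP: nz; rewrite -[v]mulmx1 -HPQ mulmx_sumr big1 // => k _.
  by rewrite mulmxA (eqP (negPn (H k))) mul0mx.
apply/eigenvalueP; exists (v *m Q k) => //.
by rewrite -mulmxA -HB mulmxA Hv -scalemxAl.
Qed.

Lemma block_horner_stable (F : fieldType) p q m (A : 'M[F]_p.+1) (D : 'M[F]_q.+1)
  (S : 'M_(m, p.+1 + q.+1)) :
  stablemx S (block_mx A 0 0 D) ->
  forall r, (S *m block_mx (horner_mx A r) 0 0 (horner_mx D r) <= S)%MS.
Proof.
move=> HS; elim/poly_ind => [|r c IH].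
  by rewrite !rmorph0 block_mx0 mulmx0 sub0mx.
rewrite !rmorphD !rmorphM /= !horner_mx_X !horner_mx_C.
move: IH; move: (horner_mx A r) (horner_mx D r) => HA HD IH.
rewrite -!mulmxE.
have E : block_mx (HA *m A + c%:M) 0 0 (HD *m D + c%:M) =
   block_mx HA 0 0 HD *m block_mx A 0 0 D + c%:M.
  rewrite mulmx_block (scalar_mx_block p.+1 q.+1 c) add_block_mx.
  by rewrite !mulmx0 !mul0mx !addr0 !add0r.
rewrite E mulmxDr addmx_sub // ?mul_mx_scalar ?scalemx_sub //.
by rewrite mulmxA; apply: submx_trans (submxMr _ IH) HS.
Qed.

Lemma block_proj (F : closedFieldType) N1 N2 (A : 'M[F]_N1) (D : 'M[F]_N2) :
  (forall a, ~ (eigenvalue A a /\ eigenvalue D a)) ->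
  forall m (S : 'M_(m, N1 + N2)), stablemx S (block_mx A 0 0 D) ->
  (S *m block_mx 1%:M 0 0 0 <= S)%MS.
Proof.
case: N1 A => [|p] A.
  move=> _ m S _; rewrite [1%:M : 'M_0]flatmx0 block_mx0 mulmx0 sub0mx //.
case: N2 D => [|q] D.
  move=> _ m S _.
  have -> : block_mx (1%:M : 'M[F]_p.+1) 0 0 (0 : 'M_0) = 1%:M.
    by rewrite [RHS](scalar_mx_block p.+1 0); congr block_mx; rewrite [RHS]flatmx0.
  by rewrite mulmx1.
move=> Heig m S HS.
have cop : coprimep (mxminpoly A) (mxminpoly D).
  apply/negPn/negP; rewrite coprimep_def => /closed_rootP[x].
  rewrite root_gcd => /andP[rA rD]; apply: (Heig x).
  by rewrite !eigenvalue_root_min.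
case/Bezout_coprimepP: cop => [[u v]] /=; rewrite -size_poly_eq1 => Hs.
set r := u * _ + _ in Hs.
have Hr : r = (r`_0)%:P by apply: size1_polyC; rewrite (eqP Hs).
have c0 : r`_0 != 0.
  apply: contraTneq Hs => h; by rewrite Hr h size_poly0.
have := block_horner_stable HS ((r`_0)^-1 *: (v * mxminpoly D)).
have -> : horner_mx A ((r`_0)^-1 *: (v * mxminpoly D)) = 1%:M.
  have E : v * mxminpoly D = r - u * mxminpoly A by rewrite /r addrC addKr.
  rewrite horner_mxZ E rmorphB rmorphM /= mx_root_minpoly mulr0 subr0.
  by rewrite [in horner_mx A r]Hr horner_mx_C -[(r`_0)%:M]scalemx1 scalerA mulVf // scale1r.
have -> // : horner_mx D ((r`_0)^-1 *: (v * mxminpoly D)) = 0.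
by rewrite horner_mxZ rmorphM /= mx_root_minpoly mulr0 scaler0.
Qed.

Section Blocks.
Variables (F : fieldType) (N1 N2 : nat).
Definition Lt : 'M[F]_(N1 + N2, N1) := col_mx 1%:M 0.
Definition Lr : 'M[F]_(N1, N1 + N2) := row_mx 1%:M 0.
Definition Rt : 'M[F]_(N1 + N2, N2) := col_mx 0 1%:M.
Definition Rr : 'M[F]_(N2, N1 + N2) := row_mx 0 1%:M.

Lemma LtLr : Lt *m Lr = block_mx 1%:M 0 0 0.
Proof. by rewrite mul_col_row !mul1mx !mul0mx. Qed.
Lemma RtRr : Rt *m Rr = block_mx 0 0 0 1%:M.
Proof. by rewrite mul_col_row !mul1mx !mul0mx. Qed.
Lemma sumLR : Lt *m Lr + Rt *m Rr = 1%:M.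
Proof.
by rewrite LtLr RtRr add_block_mx !addr0 !add0r -scalar_mx_block.
Qed.

Lemma Lblock (a : 'M[F]_N1) b c (d : 'M[F]_N2) :
  Lr *m block_mx a b c d *m Lt = a.
Proof.
by rewrite mul_row_block !mul1mx !mul0mx !addr0 mul_row_col mulmx1 mulmx0 addr0.
Qed.
Lemma Rblock (a : 'M[F]_N1) b c (d : 'M[F]_N2) :
  Rr *m block_mx a b c d *m Rt = d.
Proof.
by rewrite mul_row_block !mul1mx !mul0mx !add0r mul_row_col mulmx1 mulmx0 add0r.
Qed.
Lemma Lrow m (a : 'M[F]_(m, N1)) b : row_mx a b *m Lt = a.
Proof. by rewrite mul_row_col mulmx1 mulmx0 addr0. Qed.
Lemma Rrow m (a : 'M[F]_(m, N1)) b : row_mx a b *m Rt = b.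
Proof. by rewrite mul_row_col mulmx1 mulmx0 add0r. Qed.
Lemma Lcol m (a : 'M[F]_(N1, m)) b : Lr *m col_mx a b = a.
Proof. by rewrite mul_row_col mul1mx mul0mx addr0. Qed.
Lemma Rcol m (a : 'M[F]_(N1, m)) b : Rr *m col_mx a b = b.
Proof. by rewrite mul_row_col mul1mx mul0mx add0r. Qed.
End Blocks.

Lemma proj_stable (F : fieldType) m N N' (S : 'M[F]_(m,N)) (X E : 'M_N)
   (Pt : 'M_(N, N')) (Y : 'M_N') (Pr : 'M_(N', N)) :
  (S *m E <= S)%MS -> stablemx S X -> E = Pt *m Pr -> Pr *m X *m Pt = Y ->
  stablemx (S *m Pt) Y.
Proof.
move=> HE HX HEq HY; subst E Y.
have -> : S *m Pt *m (Pr *m X *m Pt) = S *m (Pt *m Pr) *m X *m Pt by rewrite !mulmxA.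
apply: submxMr; apply: submx_trans HX; exact: submxMr.
Qed.

Lemma block_proj2 (F : closedFieldType) N1 N2 (A : 'M[F]_N1) (D : 'M[F]_N2) :
  (forall a, ~ (eigenvalue A a /\ eigenvalue D a)) ->
  forall m (S : 'M_(m, N1 + N2)), stablemx S (block_mx A 0 0 D) ->
  (S *m (Lt F N1 N2 *m Lr F N1 N2) <= S)%MS /\ (S *m (Rt F N1 N2 *m Rr F N1 N2) <= S)%MS.
Proof.
move=> Heig m S HS; have H1 := block_proj Heig HS.
rewrite LtLr; split => //.
have -> : Rt F N1 N2 *m Rr F N1 N2 = 1%:M - Lt F N1 N2 *m Lr F N1 N2.
  by rewrite -sumLR addrC addKr.
by rewrite mulmxBr mulmx1 addmx_sub ?submx_refl // eqmx_opp LtLr.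
Qed.

Unset Implicit Arguments.

Theorem lemma4p5 (F : closedFieldType) (n w n' w' : nat)
  (B1 B2 : 'M[F]_n) (i : 'M[F]_(w, n)) (j : 'M[F]_(n, w))
  (B1' B2' : 'M[F]_n') (i' : 'M[F]_(w', n')) (j' : 'M[F]_(n', w'))
  (Bt12 : 'M[F]_(w * n', n * w')) (Bt21 : 'M[F]_(n * w', w * n')) :
  no_common_eigenvalue B1 B1' ->
  sylv12 B1 i B1' j' Bt12 ->
  sylv21 B1 j B1' i' Bt21 ->
  (stable B1 B2 i j -> stable B1' B2' i' j' ->
     stable (@T_B1 F n w n' w' B1 B1') (@T_B2 F n w n' w' B2 B2' Bt12 Bt21)
            (@T_i F n w n' w' i i') (@T_j F n w n' w' j j')) /\
  (costable B1 B2 i j -> costable B1' B2' i' j' ->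
     costable (@T_B1 F n w n' w' B1 B1') (@T_B2 F n w n' w' B2 B2' Bt12 Bt21)
            (@T_i F n w n' w' i i') (@T_j F n w n' w' j j')).
Proof.
move=> Heig _ _.
have HAD : forall a, ~ (eigenvalue (B1 *t (1%:M : 'M_w')) a /\
                        eigenvalue ((1%:M : 'M_w) *t B1') a).
  move=> a [hA hD]; apply: (Heig a); split.
    exact: (eig_transfer (P := PR n w') (Q := fun k => (PR n w' k)^T)
              (sum_PR F n w') (fun k => QR_mul k B1) hA).
  exact: (eig_transfer (P := PL n' w) (Q := fun k => (PL n' w k)^T)
              (sum_PL F n' w) (fun k => QL_mul k B1') hD).
split.
- move=> Hst Hst' S HiS [HS1 HS2].
  have [He1 He2] := block_proj2 HAD HS1.
  have H1 : (1%:M <= S *m Lt F (n * w') (w * n'))%MS.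
    apply: (stable_transfer (P := PR n w') (Q := fun k => (PR n w' k)^T)
      (sum_PR F n w') (fun k => PR_mul k B1) (fun k => PR_mul k B2) _ Hst).
    + by move=> k; rewrite PR_mul; exact: submxMl.
    + by rewrite -(Lrow (i *t 1%:M) (1%:M *t i')); exact: submxMr.
    + by apply: (proj_stable He1 HS1 (erefl _)); rewrite /T_B1 Lblock.
    + by apply: (proj_stable He1 HS2 (erefl _)); rewrite /T_B2 Lblock.
  have H2 : (1%:M <= S *m Rt F (n * w') (w * n'))%MS.
    apply: (stable_transfer (P := PL n' w) (Q := fun k => (PL n' w k)^T)
      (sum_PL F n' w) (fun k => PL_mul k B1') (fun k => PL_mul k B2') _ Hst').
    + by move=> k; rewrite PL_mul; exact: submxMl.
    + by rewrite -(Rrow (i *t 1%:M) (1%:M *t i')); exact: submxMr.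
    + by apply: (proj_stable He2 HS1 (erefl _)); rewrite /T_B1 Rblock.
    + by apply: (proj_stable He2 HS2 (erefl _)); rewrite /T_B2 Rblock.
  apply/eqmxP; rewrite submx1 /=.
  rewrite (scalar_mx_block (n * w') (w * n') 1) /block_mx col_mx_sub.
  apply/andP; split.
    rewrite -[row_mx _ _]mul1mx; apply: submx_trans He1.
    by rewrite mulmxA; apply: submxMr.
  rewrite -[row_mx _ _]mul1mx; apply: submx_trans He2.
  by rewrite mulmxA; apply: submxMr.
- move=> Hco Hco' S HSj [HS1 HS2].
  have [He1 He2] := block_proj2 HAD HS1.
  have Hk : (S *m T_j j j' = 0) by apply/sub_kermxP.
  have H1 : S *m Lt F (n * w') (w * n') = 0.
    apply: (costable_transfer (P := PR n w') (Q := fun k => (PR n w' k)^T)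
      (R := fun k => (PR w w' k)^T)
      (sum_PR F n w') (fun k => QR_mul k B1) (fun k => QR_mul k B2)
      (fun k => QR_mul k j) Hco).
    + apply/sub_kermxP.
      have -> : S *m Lt F _ _ *m (j *t 1%:M) = S *m (Lt F _ _ *m Lr F _ _) *m T_j j j'.
        by rewrite /T_j -!mulmxA Lcol.
      by apply/sub_kermxP; apply: submx_trans He1 HSj.
    + by apply: (proj_stable He1 HS1 (erefl _)); rewrite /T_B1 Lblock.
    + by apply: (proj_stable He1 HS2 (erefl _)); rewrite /T_B2 Lblock.
  have H2 : S *m Rt F (n * w') (w * n') = 0.
    apply: (costable_transfer (P := PL n' w) (Q := fun k => (PL n' w k)^T)
      (R := fun k => (PL w' w k)^T)
      (sum_PL F n' w) (fun k => QL_mul k B1') (fun k => QL_mul k B2')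
      (fun k => QL_mul k j') Hco').
    + apply/sub_kermxP.
      have -> : S *m Rt F _ _ *m (1%:M *t j') = S *m (Rt F _ _ *m Rr F _ _) *m T_j j j'.
        by rewrite /T_j -!mulmxA Rcol.
      by apply/sub_kermxP; apply: submx_trans He2 HSj.
    + by apply: (proj_stable He2 HS1 (erefl _)); rewrite /T_B1 Rblock.
    + by apply: (proj_stable He2 HS2 (erefl _)); rewrite /T_B2 Rblock.
  by rewrite -[S]mulmx1 -sumLR mulmxDr !mulmxA H1 H2 !mul0mx addr0.
Qed.
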